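(* Let $C$ be the closed disk with center $(a,b)$ and radius $r>0$; for $i\in\mathbb{N}$ let $C_i$ be the closed disk with center $(ia,ib)$ and radius $ir$; let $\mathcal{S}=\bigcup_{i\geq0}C_i\cap\mathbb{N}^2$, and let $\tau_1,\tau_2$ be the extremal rays of $L_{\mathbb{Q}_{\geq}}(C\cap\mathbb{R}^2_{\geq})$. Then every $X=(x,y)\in\mathcal{S}\setminus(\tau_1\cup\tau_2)$ satisfies $$\frac{1}{2}\left(\frac{(a,b)\cdot(x,y)}{\sqrt{(\mathrm{d}(X)r)^2-[(b,-a)\cdot(x,y)]^2}}+1\right)\mathrm{d}(X)\ \bmod\ \frac{\mathrm{d}(X)\left(\mathrm{d}((a,b))^2-r^2\right)}{2\sqrt{(\mathrm{d}(X)r)^2-[(b,-a)\cdot(x,y)]^2}}\ \le\ \mathrm{d}(X).$$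
   Context: $\mathbb{N}=\{0,1,2,\dots\}$. For $A\subseteq\mathbb{R}^2_{\geq}$, $L_{\mathbb{Q}_{\geq}}(A)=\{\sum_{i=1}^p q_ia_i\mid p\in\mathbb{N},\ q_i\in\mathbb{Q}_{\geq},\ a_i\in A\}$ and its extremal rays are its two boundary half-lines from the origin. $\mathrm{d}(X)$ is the Euclidean norm of $X$; $\cdot$ is the standard dot product. For real $u$ and $v>0$, $u\bmod v=u-v\lfloor u/v\rfloor$. *)

(* Defs.v *)
From HB Require Import structures.
From mathcomp Require Import all_boot all_order all_algebra.
From mathcomp Require Import all_classical all_reals all_analysis.
Set Implicit Arguments. Unset Strict Implicit. Unset Printing Implicit Defensive.
Import Order.TTheory GRing.Theory Num.Theory numFieldNormedType.Exports.
Local Open Scope classical_set_scope.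
Local Open Scope ring_scope.

Section Defs.
Variable R : realType.

Definition dnorm (p : R * R) : R := Num.sqrt (p.1 ^+ 2 + p.2 ^+ 2).

Definition dot (p q : R * R) : R := p.1 * q.1 + p.2 * q.2.

Definition rmod (u v : R) : R := u - v * (Num.floor (u / v))%:~R.

Definition cdisk (c : R * R) (rho : R) : set (R * R) :=
  [set p | (p.1 - c.1) ^+ 2 + (p.2 - c.2) ^+ 2 <= rho ^+ 2].

Definition quadrant : set (R * R) := [set p | 0 <= p.1 /\ 0 <= p.2].

Definition ratcone (A : set (R * R)) : set (R * R) :=
  [set v | exists (p : nat) (q : 'I_p -> rat) (pts : 'I_p -> R * R),
      (forall i, 0 <= q i) /\ (forall i, A (pts i)) /\
      v = (\sum_(i < p) ratr (q i) * (pts i).1, \sum_(i < p) ratr (q i) * (pts i).2)].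

Definition halfline (u : R * R) : set (R * R) :=
  [set p | exists t : R, 0 <= t /\ p = (t * u.1, t * u.2)].

(* boundary half-lines from the origin of a cone K (its extremal rays):
   half-lines contained in the topological boundary closure K \ interior K *)
Definition extremal_ray (K : set (R * R)) (rho : set (R * R)) : Prop :=
  exists u : R * R, u != (0, 0) /\ rho = halfline u /\
    rho `<=` closure K /\ rho `&` interior K = set0.

Definition circle_semigroup (a b r : R) : set (nat * nat) :=
  [set X | exists i : nat,
      cdisk (i%:R * a, i%:R * b) (i%:R * r) (X.1%:R, X.2%:R)].
End Defs.

(* Main.v *)
Require Import Defs.
From HB Require Import structures.
From mathcomp Require Import all_boot all_order all_algebra.
From mathcomp Require Import all_classical all_reals all_analysis.
From mathcomp Require Import ring lra.
Import Order.TTheory GRing.Theory Num.Theory numFieldNormedType.Exports.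
Local Open Scope classical_set_scope.
Local Open Scope ring_scope.

Lemma key {R : realType} (a b r x y t d s : R) : 0 < r ->
  r ^+ 2 < a ^+ 2 + b ^+ 2 -> d ^+ 2 = x ^+ 2 + y ^+ 2 -> 0 < s ->
  s ^+ 2 = (d * r) ^+ 2 - (b * x + - a * y) ^+ 2 ->
  (x - t * a) ^+ 2 + (y - t * b) ^+ 2 <= (t * r) ^+ 2 ->
  - s <= (a * x + b * y) - t * (a ^+ 2 + b ^+ 2 - r ^+ 2) <= s.
Proof.
move=> r0 rab hd s0 hs hdisk.
set K := a ^+ 2 + b ^+ 2 - r ^+ 2.
set e := a * x + b * y - t * K.
have K0 : 0 < K by rewrite /K subr_gt0.
have E : s ^+ 2 - e ^+ 2 = K * ((t * r) ^+ 2 - ((x - t * a) ^+ 2 + (y - t * b) ^+ 2)).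
  rewrite hs exprMn hd /e /K; ring.
have H : e ^+ 2 <= s ^+ 2.
  rewrite -subr_ge0 E; apply: mulr_ge0; [exact: ltW | by rewrite subr_ge0].
apply/andP; split; nra.
Qed.

Theorem corollary4p6 (R : realType) (a b r : R) :
  0 < r -> r < dnorm (a, b) ->
  forall x y : nat,
    circle_semigroup a b r (x, y) ->
    ~ (exists tau, extremal_ray (ratcone (cdisk (a, b) r `&` @quadrant R)) tau
                   /\ tau (x%:R, y%:R)) ->
    let X : R * R := (x%:R, y%:R) in
    let s := Num.sqrt ((dnorm X * r) ^+ 2 - (dot (b, - a) X) ^+ 2) in
    rmod (2^-1 * (dot (a, b) X / s + 1) * dnorm X)
         (dnorm X * (dnorm (a, b) ^+ 2 - r ^+ 2) / (2 * s))
    <= dnorm X.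
Proof.
move=> r0 rab x y [i hi] _; cbv zeta.
set X : R * R := (x%:R, y%:R).
set s := Num.sqrt _.
move: hi; rewrite /cdisk /= => hi.
have hab : dnorm (a, b) ^+ 2 = a ^+ 2 + b ^+ 2.
  by rewrite /dnorm /= sqr_sqrtr // addr_ge0 // sqr_ge0.
have hd : dnorm X ^+ 2 = (x%:R : R) ^+ 2 + (y%:R : R) ^+ 2.
  by rewrite /dnorm /= sqr_sqrtr // addr_ge0 // sqr_ge0.
have d0 : 0 <= dnorm X by rewrite /dnorm sqrtr_ge0.
have rab2 : r ^+ 2 < a ^+ 2 + b ^+ 2 by rewrite -hab; nra.
have sE : s = Num.sqrt ((dnorm X * r) ^+ 2 - (b * x%:R + - a * y%:R) ^+ 2) by [].
clearbody s.
rewrite /dot /= hab.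
set d := dnorm X in hd d0 sE *.
have [s0|s0] : s = 0 \/ 0 < s.
  have := sqrtr_ge0 ((d * r) ^+ 2 - (b * x%:R + - a * y%:R) ^+ 2).
  rewrite -sE le_eqVlt => /orP [/eqP <-|]; by [left|right].
  rewrite s0 /rmod mulr0 invr0 !mulr0 mul0r subr0 add0r mulr1.
  lra.
have hs : s ^+ 2 = (d * r) ^+ 2 - (b * x%:R + - a * y%:R) ^+ 2.
  rewrite sE sqr_sqrtr //; apply: ltW; by rewrite -sqrtr_gt0 -sE.
have [k1 k2] := andP (key _ _ _ _ _ _ _ _ r0 rab2 hd s0 hs hi).
set p := a * x%:R + b * y%:R in k1 k2 *.
set K := a ^+ 2 + b ^+ 2 - r ^+ 2 in k1 k2 *.
have K0 : 0 < K by rewrite /K subr_gt0.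
have dpos : 0 < d.
  rewrite lt_def d0 andbT; apply/eqP => d00.
  move: hs; rewrite d00 mul0r expr0n /= sub0r => hs.
  have := sqr_ge0 (b * x%:R + - a * y%:R); have := exprn_gt0 2 s0; lra.
set u := 2^-1 * (p / s + 1) * d.
set v := d * K / (2 * s).
have v0 : 0 < v by rewrite /v divr_gt0 // ?mulr_gt0.
have uv : u / v = (p + s) / K.
  rewrite /u /v; field.
  by rewrite !gt_eqF.
have Fi : (i%:R : R) <= (Num.floor (u / v))%:~R.
  have -> : (i%:R : R) = (i%:Z)%:~R by [].
  rewrite ler_int floor_ge_int uv /=.
  rewrite ler_pdivlMr //; lra.
have H1 : u - v * (Num.floor (u / v))%:~R <= u - v * i%:R.
  by rewrite lerD2l lerN2 ler_pM2l.
apply: (le_trans H1).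
have -> : u - v * i%:R = d * ((p + s - i%:R * K) / (2 * s)).
  rewrite /u /v; field; by rewrite gt_eqF.
rewrite -[leRHS]mulr1 ler_pM2l // ler_pdivrMr ?mulr_gt0 //; lra.
Qed.
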